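(* Let $c\ge 1$. If there exists a $c$-competitive online algorithm for line chasing in $\mathbb{R}^2$, then there exists a $c$-competitive rts-oblivious online algorithm for line chasing in $\mathbb{R}^2$.
   Context: Line chasing in $\mathbb{R}^2$: given an initial point $P_0$ and lines $X_1,\dots,X_m$ revealed one at a time, an online algorithm chooses $P_t\in X_t$ knowing only $P_0,X_1,\dots,X_t$. Formally an algorithm is a function $\mathcal{A}$ with $\mathcal{A}(P_0)=P_0$ and $\mathcal{A}(P_0,X_1,\dots,X_t)\in X_t$ for all $P_0$ and lines $X_1,\dots,X_t$; its cost on $P_0,X_1,\dots,X_m$ is $\sum_{t=1}^m|\mathcal{A}(P_0,X_1,\dots,X_{t-1})\,\mathcal{A}(P_0,X_1,\dots,X_t)|$ (Euclidean distances). It is $c$-competitive if on every input its cost is at most $c$ times $\min\{\sum_t|A_{t-1}A_t|: A_0=P_0, A_t\in X_t\}$. A direct similarity of $\mathbb{R}^2$ is a bijection $f$ that is a composition of a rotation, a translation and a scaling by some factor $r_f>0$. $\mathcal{A}$ is rts-oblivious if $\mathcal{A}(f(P_0),f(X_1),\dots,f(X_t))=f(\mathcal{A}(P_0,X_1,\dots,X_t))$ for every $P_0$, all lines $X_i$, and every direct similarity $f$. *)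

(* Defs.v *)
From Stdlib Require Import Reals List Lra.
Import ListNotations.
Open Scope R_scope.

Definition point : Type := (R * R)%type.

Definition dist (p q : point) : R :=
  sqrt ((fst p - fst q) ^ 2 + (snd p - snd q) ^ 2).

Definition is_line (X : point -> Prop) : Prop :=
  exists a b d : R, (a <> 0 \/ b <> 0) /\
    forall p : point, X p <-> a * fst p + b * snd p = d.

Fixpoint path_cost (ps : list point) : R :=
  match ps with
  | p :: ((q :: _) as rest) => dist p q + path_cost rest
  | _ => 0
  end.

(** An (online) algorithm maps P0 and the lines revealed so far
    [X1; ...; Xt] (in this order) to a point.  Since it only sees
    P0, X1, ..., Xt, it is online by construction. *)
Definition algorithm : Type := point -> list (point -> Prop) -> point.

Definition online_algorithm (A : algorithm) : Prop :=
  (forall P0, A P0 [] = P0) /\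
  (forall P0 (Xs : list (point -> Prop)) (X : point -> Prop),
      Forall is_line (Xs ++ [X]) -> X (A P0 (Xs ++ [X]))).

(** Cost of A on P0, X1..Xm :
    sum_{t=1}^m |A(P0,X1..X_{t-1}) A(P0,X1..X_t)|. *)
Definition alg_cost (A : algorithm) (P0 : point) (Xs : list (point -> Prop)) : R :=
  path_cost (map (fun t => A P0 (firstn t Xs)) (seq 0 (S (length Xs)))).

(** c-competitive: for every input, cost <= c * min over offline
    solutions A_0 = P0, A_t \in X_t of sum |A_{t-1} A_t|; stated
    as cost <= c * (cost of each offline solution). *)
Definition competitive (c : R) (A : algorithm) : Prop :=
  forall (P0 : point) (Xs : list (point -> Prop)),
    Forall is_line Xs ->
    forall Bs : list point, Forall2 (fun X b => X b) Xs Bs ->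
      alg_cost A P0 Xs <= c * path_cost (P0 :: Bs).

Definition direct_similarity (f : point -> point) : Prop :=
  exists (r theta tx ty : R), 0 < r /\
    forall p : point,
      f p = (r * (cos theta * fst p - sin theta * snd p) + tx,
             r * (sin theta * fst p + cos theta * snd p) + ty).

Definition image (f : point -> point) (X : point -> Prop) : point -> Prop :=
  fun q => exists p, X p /\ q = f p.

Definition rts_oblivious (A : algorithm) : Prop :=
  forall (f : point -> point) (P0 : point) (Xs : list (point -> Prop)),
    direct_similarity f -> Forall is_line Xs ->
    A (f P0) (map (image f) Xs) = f (A P0 Xs).

(* Main.v *)
Require Import Defs.
From Stdlib Require Import Reals List Lra Lia ClassicalEpsilon FunctionalExtensionality PropExtensionality.
From Stdlib Require Rgeom.
Import Defs.
Import ListNotations.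
Open Scope R_scope.

Definition cmul (u w : point) : point :=
  (fst u * fst w - snd u * snd w, fst u * snd w + snd u * fst w).
Definition padd (p q : point) : point := (fst p + fst q, snd p + snd q).
Definition psub (p q : point) : point := (fst p - fst q, snd p - snd q).
Definition nrm2 (u : point) : R := fst u ^ 2 + snd u ^ 2.
Definition cinv (u : point) : point := (fst u / nrm2 u, - snd u / nrm2 u).
Definition dot (p q : point) : R := fst p * fst q + snd p * snd q.

Lemma pdist_nonneg p q : 0 <= dist p q.
Proof. unfold dist; apply sqrt_pos. Qed.

Lemma pdist_refl p : dist p p = 0.
Proof. unfold dist. replace ((fst p - fst p) ^ 2 + (snd p - snd p) ^ 2) with 0 by ring. apply sqrt_0. Qed.

Lemma pdist_tri p q r : dist p r <= dist p q + dist q r.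
Proof.
  destruct p as [a b], q as [c d], r as [e f].
  pose proof (Rgeom.triangle a b e f c d) as H. unfold Rgeom.dist_euc, Rsqr in H. unfold dist; cbn [fst snd].
  replace ((a - e) ^ 2 + (b - f) ^ 2) with ((a - e) * (a - e) + (b - f) * (b - f)) by ring.
  replace ((a - c) ^ 2 + (b - d) ^ 2) with ((a - c) * (a - c) + (b - d) * (b - d)) by ring.
  replace ((c - e) ^ 2 + (d - f) ^ 2) with ((c - e) * (c - e) + (d - f) * (d - f)) by ring.
  exact H.
Qed.

Lemma nrm2_nonneg u : 0 <= nrm2 u.
Proof. unfold nrm2. nra. Qed.

Lemma nrm2_pos u : u <> (0,0) -> 0 < nrm2 u.
Proof.
  destruct u as [a b]; unfold nrm2; simpl; intro H.
  destruct (Req_dec a 0); destruct (Req_dec b 0); subst; try congruence; nra.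
Qed.

Lemma nrm2_cmul u w : nrm2 (cmul u w) = nrm2 u * nrm2 w.
Proof. unfold nrm2, cmul; simpl; ring. Qed.

Lemma dist_cmul_scale (P0 v p q : point) :
  dist (padd P0 (cmul v p)) (padd P0 (cmul v q)) = sqrt (nrm2 v) * dist p q.
Proof.
  unfold dist. rewrite <- sqrt_mult_alt by apply nrm2_nonneg. f_equal.
  destruct P0, v, p, q; unfold nrm2, padd, cmul; simpl; ring.
Qed.

Lemma pc_nonneg l : 0 <= path_cost l.
Proof.
  induction l as [|x l IH]; simpl. lra. destruct l. lra.
  pose proof (pdist_nonneg x p). lra.
Qed.

Lemma pc_map_scale (P0 v : point) l :
  path_cost (map (fun w => padd P0 (cmul v w)) l) = sqrt (nrm2 v) * path_cost l.
Proof.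
  induction l as [|x l IH]. simpl; ring.
  destruct l as [|y l]. simpl; ring.
  change (path_cost (map (fun w => padd P0 (cmul v w)) (x :: y :: l)))
    with (dist (padd P0 (cmul v x)) (padd P0 (cmul v y)) +
          path_cost (map (fun w => padd P0 (cmul v w)) (y :: l))).
  rewrite IH, dist_cmul_scale. simpl. ring.
Qed.

Lemma pc_const (p : point) (l : list nat) : path_cost (map (fun _ => p) l) = 0.
Proof.
  induction l as [|x l IH]. reflexivity. destruct l. reflexivity.
  change (dist p p + path_cost (map (fun _ => p) (n :: l)) = 0).
  rewrite IH, pdist_refl; ring.
Qed.

Lemma pc_seq_step (h : nat -> point) (x : point) s n :
  path_cost (x :: map h (seq s (S n))) = dist x (h s) + path_cost (map h (seq s (S n))).
Proof. reflexivity. Qed.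

Lemma collapse (b c : nat -> point) (K : nat) :
  (forall t, (t < K)%nat -> b t = c 0%nat) ->
  (forall t, (K <= t)%nat -> b t = c t) ->
  forall n s, path_cost (map b (seq s (S n))) <= dist (b s) (c s) + path_cost (map c (seq s (S n))).
Proof.
  intros H1 H2 n. induction n as [|n IH]; intro s.
  - simpl. pose proof (pdist_nonneg (b s) (c s)). lra.
  - change (seq s (S (S n))) with (s :: seq (S s) (S n)).
    rewrite !map_cons, !pc_seq_step.
    destruct (Nat.lt_ge_cases (S s) K) as [Hl|Hl].
    + rewrite (H1 s) by lia. rewrite (H1 (S s)) in * by lia.
      rewrite pdist_refl. specialize (IH (S s)). rewrite (H1 (S s)) in IH by lia.
      pose proof (pdist_tri (c 0%nat) (c s) (c (S s))).
      pose proof (pdist_nonneg (c 0%nat) (c s)). lra.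
    + rewrite (H2 (S s)) by lia.
      rewrite (map_ext_in b c (seq (S s) (S n))).
      2:{ intros a Ha. apply in_seq in Ha. apply H2. lia. }
      pose proof (pdist_tri (b s) (c s) (c (S s))). lra.
Qed.

Fixpoint find_line (P0 : point) (Xs : list (point -> Prop)) : option (point -> Prop) :=
  match Xs with
  | [] => None
  | X :: Xs' => if excluded_middle_informative (X P0) then find_line P0 Xs' else Some X
  end.

Definition is_foot (P0 : point) (X : point -> Prop) (F : point) : Prop :=
  X F /\ forall q, X q -> dot (psub q F) (psub F P0) = 0.

Definition foot (P0 : point) (X : point -> Prop) : point :=
  epsilon (inhabits (0,0)) (is_foot P0 X).

Definition gmap (P0 v : point) (p : point) : point := cmul (cinv v) (psub p P0).
Definition ginv (P0 v : point) (w : point) : point := padd P0 (cmul v w).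

Definition Balg (A : algorithm) : algorithm := fun P0 Xs =>
  match find_line P0 Xs with
  | None => P0
  | Some X => let v := psub (foot P0 X) P0 in
      ginv P0 v (A (0,0) (map (image (gmap P0 v)) Xs))
  end.

Lemma point_eq (p q : point) : fst p = fst q -> snd p = snd q -> p = q.
Proof. destruct p, q; simpl; intros; subst; reflexivity. Qed.

Lemma ginv_gmap P0 v p : v <> (0,0) -> ginv P0 v (gmap P0 v p) = p.
Proof.
  intro Hv. pose proof (nrm2_pos v Hv) as Hn.
  destruct P0 as [x0 y0], v as [v1 v2], p as [p1 p2].
  unfold ginv, gmap, cinv, cmul, padd, psub, nrm2 in *; cbn [fst snd] in *.
  apply point_eq; cbn [fst snd]; field; lra.
Qed.

Lemma gmap_ginv P0 v w : v <> (0,0) -> gmap P0 v (ginv P0 v w) = w.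
Proof.
  intro Hv. pose proof (nrm2_pos v Hv) as Hn.
  destruct P0 as [x0 y0], v as [v1 v2], w as [p1 p2].
  unfold ginv, gmap, cinv, cmul, padd, psub, nrm2 in *; cbn [fst snd] in *.
  apply point_eq; cbn [fst snd]; field; lra.
Qed.

Lemma ginv_0 P0 v : ginv P0 v (0,0) = P0.
Proof. destruct P0, v; unfold ginv, cmul, padd; cbn [fst snd]; apply point_eq; cbn [fst snd]; ring. Qed.

Lemma gmap_P0 P0 v : gmap P0 v P0 = (0,0).
Proof. destruct P0, v; unfold gmap, cinv, cmul, psub; cbn [fst snd]; apply point_eq; cbn [fst snd]; ring. Qed.

Lemma image_line P0 v X : v <> (0,0) -> is_line X -> is_line (image (gmap P0 v) X).
Proof.
  intros Hv [a [b [d [Hab HX]]]].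
  pose proof (nrm2_pos v Hv) as Hn.
  destruct P0 as [x0 y0], v as [v1 v2]. unfold nrm2 in Hn; cbn [fst snd] in Hn.
  exists (a * v1 + b * v2), (b * v1 - a * v2), (d - a * x0 - b * y0). split.
  - destruct (Req_dec (a * v1 + b * v2) 0) as [E1|E1]; [|left; exact E1].
    destruct (Req_dec (b * v1 - a * v2) 0) as [E2|E2]; [|right; exact E2].
    exfalso.
    assert (Hz : (a ^ 2 + b ^ 2) * (v1 ^ 2 + v2 ^ 2) = 0).
    { replace ((a ^ 2 + b ^ 2) * (v1 ^ 2 + v2 ^ 2)) with
        ((a * v1 + b * v2) ^ 2 + (b * v1 - a * v2) ^ 2) by ring. rewrite E1, E2. ring. }
    apply Rmult_integral in Hz. destruct Hz as [Hz|Hz]; [|lra].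
    destruct Hab; nra.
  - intros q. split.
    + intros [p [Hp ->]]. apply HX in Hp.
      replace p with (ginv (x0,y0) (v1,v2) (gmap (x0,y0) (v1,v2) p)) in Hp by (apply ginv_gmap; exact Hv).
      revert Hp. generalize (gmap (x0, y0) (v1, v2) p) as w. intros [w1 w2].
      unfold ginv, padd, cmul; cbn [fst snd]. intro; lra.
    + intro Hq. exists (ginv (x0,y0) (v1,v2) q). split.
      * apply HX. destruct q as [q1 q2]. unfold ginv, padd, cmul in *; cbn [fst snd] in *. lra.
      * symmetry. apply gmap_ginv. exact Hv.
Qed.

Lemma fl_none P0 Xs : find_line P0 Xs = None <-> Forall (fun X => X P0) Xs.
Proof.
  induction Xs as [|X Xs IH]; simpl. split; auto.
  destruct (excluded_middle_informative (X P0)) as [h|h].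
  - rewrite IH. split; intro H. constructor; auto. inversion H; auto.
  - split; intro H. discriminate. inversion H; contradiction.
Qed.

Lemma fl_some P0 Xs X : find_line P0 Xs = Some X ->
  In X Xs /\ ~ X P0 /\ exists K, (1 <= K)%nat /\
  (forall t, (t < K)%nat -> find_line P0 (firstn t Xs) = None) /\
  (forall t, (K <= t)%nat -> find_line P0 (firstn t Xs) = Some X).
Proof.
  induction Xs as [|Y Xs IH]; simpl. discriminate.
  destruct (excluded_middle_informative (Y P0)) as [h|h]; intro E.
  - destruct (IH E) as [Hin [Hn [K [HK [H1 H2]]]]]. split; [right; exact Hin|]. split; [exact Hn|].
    exists (S K). split. lia. split.
    + intros [|t] Ht. reflexivity. simpl.
      destruct (excluded_middle_informative (Y P0)); [|contradiction]. apply H1. lia.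
    + intros [|t] Ht. lia. simpl.
      destruct (excluded_middle_informative (Y P0)); [|contradiction]. apply H2. lia.
  - injection E as <-. split; [left; reflexivity|]. split; [exact h|].
    exists 1%nat. split. lia. split.
    + intros [|t] Ht. reflexivity. lia.
    + intros [|t] Ht. lia. simpl.
      destruct (excluded_middle_informative (Y P0)); [contradiction|reflexivity].
Qed.

Lemma foot_exists P0 X : is_line X -> ~ X P0 -> exists F, is_foot P0 X F.
Proof.
  intros [a [b [d [Hab HX]]]] Hn.
  destruct P0 as [x0 y0].
  assert (Hp : 0 < a ^ 2 + b ^ 2) by (destruct Hab; nra).
  set (t := (d - a * x0 - b * y0) / (a ^ 2 + b ^ 2)).
  exists (x0 + t * a, y0 + t * b). split.
  - apply HX. cbn [fst snd]. unfold t. field. lra.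
  - intros [q1 q2] Hq. apply HX in Hq. cbn [fst snd] in Hq.
    unfold dot, psub; cbn [fst snd].
    replace ((q1 - (x0 + t * a)) * (x0 + t * a - x0) + (q2 - (y0 + t * b)) * (y0 + t * b - y0))
      with (t * ((a * q1 + b * q2) - (a * x0 + b * y0) - t * (a ^ 2 + b ^ 2))) by ring.
    rewrite Hq. unfold t. field. lra.
Qed.

Lemma foot_unique P0 X F1 F2 : is_foot P0 X F1 -> is_foot P0 X F2 -> F1 = F2.
Proof.
  intros [H1 K1] [H2 K2]. specialize (K1 F2 H2). specialize (K2 F1 H1).
  destruct F1 as [a b], F2 as [c d], P0 as [x y]; unfold dot, psub in *; cbn [fst snd] in *.
  assert (E : (c - a) ^ 2 + (d - b) ^ 2 = 0).
  { replace ((c - a) ^ 2 + (d - b) ^ 2) with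
      (- ((c - a) * (a - x) + (d - b) * (b - y) + ((a - c) * (c - x) + (b - d) * (d - y)))) by ring.
    rewrite K1, K2. ring. }
  pose proof (pow2_ge_0 (c-a)); pose proof (pow2_ge_0 (d-b)).
  assert (A1 : c - a = 0) by (match goal with |- ?z = 0 => destruct (Req_dec z 0) as [?|Hz]; [assumption|exfalso; apply (pow_nonzero _ 2 Hz); lra] end).
  assert (A2 : d - b = 0) by (match goal with |- ?z = 0 => destruct (Req_dec z 0) as [?|Hz]; [assumption|exfalso; apply (pow_nonzero _ 2 Hz); lra] end).
  apply point_eq; cbn [fst snd]; lra.
Qed.

Lemma foot_spec P0 X : is_line X -> ~ X P0 -> is_foot P0 X (foot P0 X).
Proof. intros. unfold foot. apply epsilon_spec. apply foot_exists; auto. Qed.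

Lemma foot_ne P0 X : is_line X -> ~ X P0 -> psub (foot P0 X) P0 <> (0,0).
Proof.
  intros HL Hn E. destruct (foot_spec P0 X HL Hn) as [HF _].
  assert (foot P0 X = P0).
  { destruct (foot P0 X) as [a b], P0 as [x y]; unfold psub in E; cbn [fst snd] in E.
    injection E; intros; apply point_eq; cbn [fst snd]; lra. }
  rewrite H in HF. contradiction.
Qed.

Lemma Balg_online A : online_algorithm A -> online_algorithm (Balg A).
Proof.
  intros [HA0 HA1]. split.
  - intro P0. reflexivity.
  - intros P0 Xs X HL. unfold Balg.
    destruct (find_line P0 (Xs ++ [X])) as [Y|] eqn:E.
    + destruct (fl_some _ _ _ E) as [Hin [Hn _]].
      assert (HY : is_line Y) by (rewrite Forall_forall in HL; auto).
      pose proof (foot_ne P0 Y HY Hn) as Hv.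
      set (v := psub (foot P0 Y) P0) in *.
      rewrite map_app. simpl.
      assert (HL' : Forall is_line (map (image (gmap P0 v)) (Xs ++ [X]))).
      { rewrite Forall_map. eapply Forall_impl; [|exact HL]. intros. apply image_line; auto. }
      rewrite map_app in HL'. simpl in HL'.
      destruct (HA1 (0,0) _ _ HL') as [p [Hp Ep]]. rewrite Ep, ginv_gmap; auto.
    + apply fl_none in E. apply Forall_app in E. destruct E as [_ E]. inversion E; auto.
Qed.

Lemma Forall2_map_img (g : point -> point) Xs Bs :
  Forall2 (fun X b => X b) Xs Bs -> Forall2 (fun X b => X b) (map (image g) Xs) (map g Bs).
Proof. induction 1; simpl; constructor; auto. exists y; auto. Qed.

Lemma Balg_competitive c A : 1 <= c -> online_algorithm A -> competitive c A -> competitive c (Balg A).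
Proof.
  intros Hc [HA0 HA1] HC P0 Xs HL Bs HB. unfold alg_cost.
  destruct (find_line P0 Xs) as [X|] eqn:E.
  - destruct (fl_some _ _ _ E) as [Hin [Hn [K [HK [H1 H2]]]]].
    assert (HX : is_line X) by (rewrite Forall_forall in HL; auto).
    pose proof (foot_ne P0 X HX Hn) as Hv.
    set (v := psub (foot P0 X) P0) in *.
    set (Ys := map (image (gmap P0 v)) Xs).
    set (cc := fun t => ginv P0 v (A (0,0) (firstn t Ys))).
    eapply Rle_trans.
    { apply (collapse _ cc K).
      - intros t Ht. unfold Balg. rewrite (H1 t Ht). unfold cc. simpl. rewrite HA0. symmetry; apply ginv_0.
      - intros t Ht. unfold Balg. rewrite (H2 t Ht). unfold cc, Ys. rewrite firstn_map. reflexivity. }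
    unfold Balg at 1. rewrite (H1 0%nat) by lia. unfold cc at 1. simpl firstn. rewrite HA0, ginv_0, pdist_refl, Rplus_0_l.
    unfold cc. rewrite <- (map_map (fun t => A (0,0) (firstn t Ys)) (fun w => padd P0 (cmul v w))).
    rewrite pc_map_scale.
    assert (HLY : Forall is_line Ys).
    { unfold Ys. rewrite Forall_map. eapply Forall_impl; [|exact HL]. intros. apply image_line; auto. }
    pose proof (HC (0,0) Ys HLY (map (gmap P0 v) Bs) (Forall2_map_img _ _ _ HB)) as HA.
    unfold alg_cost in HA. unfold Ys in HA at 2. rewrite length_map in HA. fold Ys in HA.
    rewrite <- (gmap_P0 P0 v) in HA. change (gmap P0 v P0 :: map (gmap P0 v) Bs) with (map (gmap P0 v) (P0 :: Bs)) in HA.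
    assert (Eq : path_cost (P0 :: Bs) = sqrt (nrm2 v) * path_cost (map (gmap P0 v) (P0 :: Bs))).
    { rewrite <- (pc_map_scale P0 v), map_map. f_equal. rewrite <- (map_id (P0 :: Bs)) at 1.
      apply map_ext. intro; symmetry; apply ginv_gmap; auto. }
    rewrite Eq. pose proof (sqrt_pos (nrm2 v)).
    replace (c * (sqrt (nrm2 v) * path_cost (map (gmap P0 v) (P0 :: Bs))))
      with (sqrt (nrm2 v) * (c * path_cost (map (gmap P0 v) (P0 :: Bs)))) by ring.
    apply Rmult_le_compat_l; auto.
    rewrite gmap_P0 in HA. exact HA.
  - rewrite (map_ext_in _ (fun _ => P0)).
    + rewrite pc_const. pose proof (pc_nonneg (P0 :: Bs)). nra.
    + intros t _. unfold Balg. apply fl_none in E.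
      assert (find_line P0 (firstn t Xs) = None) as ->; [|reflexivity].
      apply fl_none. rewrite Forall_forall in *. intros x Hx. apply E. rewrite <- (firstn_skipn t Xs). apply in_or_app; left; exact Hx.
Qed.

Definition aff (l t : point) (p : point) : point := padd (cmul l p) t.

Lemma sim_aff f : direct_similarity f -> exists l t, l <> (0,0) /\ f = aff l t.
Proof.
  intros [r [th [tx [ty [Hr Hf]]]]].
  exists (r * cos th, r * sin th), (tx, ty). split.
  - intro E. injection E as E1 E2.
    pose proof (sin2_cos2 th) as S. unfold Rsqr in S.
    assert (r * r * (sin th * sin th + cos th * cos th) = 0) by nra. rewrite S in H. nra.
  - apply functional_extensionality. intro p. rewrite Hf. unfold aff, padd, cmul; cbn [fst snd].
    apply point_eq; cbn [fst snd]; ring.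
Qed.

Lemma aff_inj l t p q : l <> (0,0) -> aff l t p = aff l t q -> p = q.
Proof.
  intros Hl E. pose proof (nrm2_pos l Hl) as Hn.
  destruct l as [a b], p as [p1 p2], q as [q1 q2], t as [t1 t2].
  unfold aff, cmul, padd, nrm2 in *; cbn [fst snd] in *.
  injection E as E1 E2.
  assert (D1 : (a ^ 2 + b ^ 2) * (p1 - q1) = 0).
  { replace ((a ^ 2 + b ^ 2) * (p1 - q1)) with (a * ((a * p1 - b * p2 + t1) - (a * q1 - b * q2 + t1)) + b * ((a * p2 + b * p1 + t2) - (a * q2 + b * q1 + t2))) by ring.
    rewrite E1, E2; ring. }
  assert (D2 : (a ^ 2 + b ^ 2) * (p2 - q2) = 0).
  { replace ((a ^ 2 + b ^ 2) * (p2 - q2)) with (a * ((a * p2 + b * p1 + t2) - (a * q2 + b * q1 + t2)) - b * ((a * p1 - b * p2 + t1) - (a * q1 - b * q2 + t1))) by ring.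
    rewrite E1, E2; ring. }
  apply Rmult_integral in D1; apply Rmult_integral in D2.
  assert (p1 = q1) by (destruct D1; lra). assert (p2 = q2) by (destruct D2; lra).
  subst; reflexivity.
Qed.

Lemma image_aff_mem l t X p : l <> (0,0) -> (image (aff l t) X (aff l t p) <-> X p).
Proof.
  intro Hl. split.
  - intros [q [Hq E]]. apply aff_inj in E; auto. subst; auto.
  - intro H. exists p; auto.
Qed.

Lemma find_aff l t P0 Xs : l <> (0,0) ->
  find_line (aff l t P0) (map (image (aff l t)) Xs) = option_map (image (aff l t)) (find_line P0 Xs).
Proof.
  intro Hl. induction Xs as [|X Xs IH]; simpl. reflexivity.
  destruct (excluded_middle_informative (image (aff l t) X (aff l t P0))) as [h|h];
  destruct (excluded_middle_informative (X P0)) as [h'|h']; auto.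
  - apply image_aff_mem in h; auto; contradiction.
  - exfalso; apply h; apply image_aff_mem; auto.
Qed.

Lemma foot_aff l t P0 X : l <> (0,0) -> is_line X -> ~ X P0 ->
  foot (aff l t P0) (image (aff l t) X) = aff l t (foot P0 X).
Proof.
  intros Hl HL Hn. pose proof (foot_spec P0 X HL Hn) as [HF HK].
  apply (foot_unique (aff l t P0) (image (aff l t) X)).
  - unfold foot. apply epsilon_spec. exists (aff l t (foot P0 X)).
    split. apply image_aff_mem; auto.
    intros q [p [Hp ->]]. specialize (HK p Hp). revert HK.
    generalize (foot P0 X). intros [f1 f2]. destruct l, t, p, P0.
    unfold dot, psub, aff, padd, cmul in *; cbn [fst snd] in *. intro HK.
    replace ((r * r3 - r0 * r4 + r1 - (r * f1 - r0 * f2 + r1)) *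
 (r * f1 - r0 * f2 + r1 - (r * r5 - r0 * r6 + r1)) +
 (r * r4 + r0 * r3 + r2 - (r * f2 + r0 * f1 + r2)) *
 (r * f2 + r0 * f1 + r2 - (r * r6 + r0 * r5 + r2))) with
      ((r^2 + r0^2) * ((r3 - f1) * (f1 - r5) + (r4 - f2) * (f2 - r6))) by ring.
    rewrite HK; ring.
  - split. apply image_aff_mem; auto.
    intros q [p [Hp ->]]. specialize (HK p Hp). revert HK.
    generalize (foot P0 X). intros [f1 f2]. destruct l, t, p, P0.
    unfold dot, psub, aff, padd, cmul in *; cbn [fst snd] in *. intro HK.
    replace ((r * r3 - r0 * r4 + r1 - (r * f1 - r0 * f2 + r1)) *
 (r * f1 - r0 * f2 + r1 - (r * r5 - r0 * r6 + r1)) +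
 (r * r4 + r0 * r3 + r2 - (r * f2 + r0 * f1 + r2)) *
 (r * f2 + r0 * f1 + r2 - (r * r6 + r0 * r5 + r2))) with
      ((r^2 + r0^2) * ((r3 - f1) * (f1 - r5) + (r4 - f2) * (f2 - r6))) by ring.
    rewrite HK; ring.
Qed.

Lemma gmap_aff l t P0 v p : l <> (0,0) -> v <> (0,0) ->
  gmap (aff l t P0) (cmul l v) (aff l t p) = gmap P0 v p.
Proof.
  intros Hl Hv. pose proof (nrm2_pos l Hl) as H1. pose proof (nrm2_pos v Hv) as H2.
  pose proof (nrm2_cmul l v) as H3.
  assert (H4 : nrm2 (cmul l v) <> 0) by (rewrite H3; nra).
  destruct l as [a b], v as [v1 v2], t, P0, p.
  unfold gmap, cinv, aff, padd, psub, cmul, nrm2 in *; cbn [fst snd] in *.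
  apply point_eq; cbn [fst snd]; field; split; lra.
Qed.

Lemma ginv_aff l t P0 v w : ginv (aff l t P0) (cmul l v) w = aff l t (ginv P0 v w).
Proof.
  destruct l, t, P0, v, w. unfold ginv, aff, padd, cmul; cbn [fst snd].
  apply point_eq; cbn [fst snd]; ring.
Qed.

Lemma psub_aff l t p q : psub (aff l t p) (aff l t q) = cmul l (psub p q).
Proof.
  destruct l, t, p, q. unfold psub, aff, padd, cmul; cbn [fst snd].
  apply point_eq; cbn [fst snd]; ring.
Qed.

Lemma Balg_oblivious A : rts_oblivious (Balg A).
Proof.
  intros f P0 Xs Hf HL. destruct (sim_aff f Hf) as [l [t [Hl ->]]].
  unfold Balg. rewrite find_aff by exact Hl.
  destruct (find_line P0 Xs) as [X|] eqn:E; simpl; [|reflexivity].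
  destruct (fl_some _ _ _ E) as [Hin [Hn _]].
  assert (HX : is_line X) by (rewrite Forall_forall in HL; auto).
  pose proof (foot_ne P0 X HX Hn) as Hv.
  rewrite foot_aff by auto. rewrite psub_aff.
  set (v := psub (foot P0 X) P0) in *.
  rewrite ginv_aff. f_equal. f_equal.
  rewrite map_map. f_equal. apply map_ext. intro Y.
  apply functional_extensionality. intro q. apply propositional_extensionality.
  split.
  - intros [p [[r [Hr ->]] ->]]. exists r. split; auto. apply gmap_aff; auto.
  - intros [r [Hr ->]]. exists (aff l t r). split. exists r; auto. symmetry; apply gmap_aff; auto.
Qed.

Theorem mainTheorem3 (c : R) (hc : 1 <= c) :
  (exists A : algorithm, online_algorithm A /\ competitive c A) ->
  exists A : algorithm, online_algorithm A /\ competitive c A /\ rts_oblivious A.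
Proof.
  intros [A [HA HC]]. exists (Balg A). split; [|split].
  - apply Balg_online; auto.
  - apply Balg_competitive; auto.
  - apply Balg_oblivious.
Qed.
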